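(* In the near-field model below, with $\mathbf w_{\mathrm s}=\mathbf h_{\mathrm s}^*/\|\mathbf h_{\mathrm s}\|$, $p>0$, $L\in\mathbb Z_{>0}$, $\alpha_{\mathrm s}>0$, the downlink sensing rate $\mathcal R^{\mathrm s}_{\mathrm{d,s}}=\frac1L\log_2(1+pL\alpha_{\mathrm s}\|\mathbf h_{\mathrm s}\|^4)$ satisfies, as $N_y,N_z\to\infty$ with all other parameters fixed, $$\lim_{N_y,N_z\to\infty}\mathcal R^{\mathrm s}_{\mathrm{d,s}}=\frac1L\log_2\!\Big(1+\frac{pL\alpha_{\mathrm s}\zeta^2}{9}\Big).$$
   Context: Near-field model: a uniform planar array lies in the $y$–$z$ plane centered at the origin, with $N=N_yN_z$ elements ($N_y,N_z$ odd). Element $(n_y,n_z)$, $n_y\in\{-\frac{N_y-1}2,\dots,\frac{N_y-1}2\}$, $n_z\in\{-\frac{N_z-1}2,\dots,\frac{N_z-1}2\}$, is a $\sqrt A\times\sqrt A$ square centered at $(0,n_yd,n_zd)$, with spacing $d>\sqrt A$; $\zeta=A/d^2\in(0,1]$; $\lambda>0$ is the wavelength. The target is at distance $r_{\mathrm s}$, elevation $\theta_{\mathrm s}\in[0,\pi]$, azimuth $\phi_{\mathrm s}\in[-\pi/2,\pi/2]$; $\Psi_{\mathrm s}=\sin\theta_{\mathrm s}\cos\phi_{\mathrm s}$, $\Phi_{\mathrm s}=\sin\theta_{\mathrm s}\sin\phi_{\mathrm s}$, $\Omega_{\mathrm s}=\cos\theta_{\mathrm s}$, $\epsilon_{\mathrm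 s}=d/r_{\mathrm s}$, $r_{n_y,n_z}=r_{\mathrm s}\sqrt{(n_y\epsilon_{\mathrm s}-\Phi_{\mathrm s})^2+(n_z\epsilon_{\mathrm s}-\Omega_{\mathrm s})^2+\Psi_{\mathrm s}^2}$. The channel $\mathbf h_{\mathrm s}\in\mathbb C^N$ has entries $\sqrt{A\frac{r_{\mathrm s}^3\Psi_{\mathrm s}^3+r_{\mathrm s}\Psi_{\mathrm s}(r_{\mathrm s}\Omega_{\mathrm s}-n_zd)^2}{4\pi r_{n_y,n_z}^5}}\,e^{-\mathrm j\frac{2\pi}{\lambda}r_{n_y,n_z}}$. The paper assumes throughout $r_{\mathrm s}\gg d$, $r_{\mathrm s}\gg\sqrt A$, so $\epsilon_{\mathrm s}\ll1$. *)

(* Defs.v *)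
From Stdlib Require Import Reals Lra.
From Coquelicot Require Import Coquelicot.
Open Scope R_scope.

Definition Psi (th ph : R) : R := sin th * cos ph.
Definition Phi (th ph : R) : R := sin th * sin ph.
Definition Omega (th : R) : R := cos th.

(* distance from the target (r, th, ph) to element (ny, nz) with spacing d *)
Definition rdist (d r th ph ny nz : R) : R :=
  let eps := d / r in
  r * sqrt ((ny * eps - Phi th ph) ^ 2 + (nz * eps - Omega th) ^ 2 + Psi th ph ^ 2).

Definition h_entry (A d lam r th ph ny nz : R) : C :=
  let rn := rdist d r th ph ny nz in
  let amp := sqrt (A * (r ^ 3 * Psi th ph ^ 3
                        + r * Psi th ph * (r * Omega th - nz * d) ^ 2)
                   / (4 * PI * rn ^ 5)) in
  (amp * cos (2 * PI / lam * rn), - (amp * sin (2 * PI / lam * rn))).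

(* squared norm ||h_s||^2 for N_y = 2a+1, N_z = 2b+1 elements:
   n_y ranges over -a..a, n_z over -b..b *)
Definition hnorm_sq (A d lam r th ph : R) (a b : nat) : R :=
  sum_f_R0 (fun k =>
    sum_f_R0 (fun l =>
      Cmod (h_entry A d lam r th ph (INR k - INR a) (INR l - INR b)) ^ 2)
      (2 * b)) (2 * a).

Definition hnorm (A d lam r th ph : R) (a b : nat) : R :=
  sqrt (hnorm_sq A d lam r th ph a b).

Definition log2 (x : R) : R := ln x / ln 2.

Definition rate_ds (p alpha : R) (L : nat) (A d lam r th ph : R) (a b : nat) : R :=
  / INR L * log2 (1 + p * INR L * alpha * hnorm A d lam r th ph a b ^ 4).

Definition zeta (A d : R) : R := A / d ^ 2.

(* Main.v *)
Require Import Defs.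
From Stdlib Require Import Reals.
From Stdlib Require Import Reals Lra FunctionalExtensionality.
From Coquelicot Require Import Coquelicot.
Open Scope R_scope.

Lemma cell (f P V : R -> R) (h x : R) :
  0 < h -> (forall x, derivable_pt_lim P x (f x)) ->
  (forall x y, x <= y -> Rabs (f x - f y) <= V y - V x) ->
  Rabs (h * f x - (P (x + h) - P x)) <= h * (V (x + h) - V x).
Proof.
  intros Hh HP HV.
  destruct (MVT_cor2 P f x (x + h)) as [c [Hc1 Hc2]]; [lra| intros; apply HP|].
  rewrite Hc1.
  replace (h * f x - f c * (x + h - x)) with (h * (f x - f c)) by ring.
  rewrite Rabs_mult, Rabs_pos_eq by lra.
  apply Rmult_le_compat_l; [lra|].
  assert (H1 := HV x c ltac:(lra)). assert (H2 := HV c (x+h) ltac:(lra)).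
  pose proof (Rabs_pos (f c - f (x+h))). lra.
Qed.

Lemma riemann (f P V : R -> R) (h x0 : R) (n : nat) :
  0 < h -> (forall x, derivable_pt_lim P x (f x)) ->
  (forall x y, x <= y -> Rabs (f x - f y) <= V y - V x) ->
  Rabs (sum_f_R0 (fun k => h * f (x0 + INR k * h)) n
        - (P (x0 + INR (S n) * h) - P x0))
  <= h * (V (x0 + INR (S n) * h) - V x0).
Proof.
  intros Hh HP HV.
  induction n as [|n IH].
  - simpl. replace (x0 + 1 * h) with (x0 + h) by ring.
    replace (x0 + 0 * h) with x0 by ring. apply cell; auto.
  - rewrite tech5.
    assert (Hc := cell f P V h (x0 + INR (S n) * h) Hh HP HV).
    replace (x0 + INR (S (S n)) * h) with (x0 + INR (S n) * h + h)
      by (rewrite (S_INR (S n)); ring).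
    match goal with |- Rabs ?X <= _ =>
      replace X with ((sum_f_R0 (fun k : nat => h * f (x0 + INR k * h)) n -
        (P (x0 + INR (S n) * h) - P x0)) + (h * f (x0 + INR (S n) * h) -
        (P (x0 + INR (S n) * h + h) - P (x0 + INR (S n) * h)))) by ring end.
    eapply Rle_trans; [apply Rabs_triang|]. lra.
Qed.

Lemma unimodal_V (f : R -> R) :
  (forall x y, x <= y <= 0 -> f x <= f y) ->
  (forall x y, 0 <= x <= y -> f y <= f x) ->
  forall x y, x <= y ->
  Rabs (f x - f y) <= (fun t => if Rle_dec t 0 then f t else 2 * f 0 - f t) y
                     - (fun t => if Rle_dec t 0 then f t else 2 * f 0 - f t) x.
Proof.
  intros Hi Hd x y Hxy. simpl.
  destruct (Rle_dec y 0); destruct (Rle_dec x 0).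
  - assert (f x <= f y) by (apply Hi; lra). rewrite Rabs_left1; lra.
  - lra.
  - assert (f x <= f 0) by (apply Hi; lra). assert (f y <= f 0) by (apply Hd; lra).
    unfold Rabs; destruct (Rcase_abs _); lra.
  - assert (f y <= f x) by (apply Hd; lra). rewrite Rabs_pos_eq; lra.
Qed.

Lemma riemann_uni (f P : R -> R) (h x0 : R) (n : nat) :
  0 < h -> (forall x, derivable_pt_lim P x (f x)) ->
  (forall x, 0 <= f x) ->
  (forall x y, x <= y <= 0 -> f x <= f y) ->
  (forall x y, 0 <= x <= y -> f y <= f x) ->
  Rabs (sum_f_R0 (fun k => h * f (x0 + INR k * h)) n
        - (P (x0 + INR (S n) * h) - P x0))
  <= 2 * h * f 0.
Proof.
  intros Hh HP Hp Hi Hd.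
  eapply Rle_trans; [apply (riemann f P _ h x0 n Hh HP (unimodal_V f Hi Hd))|].
  simpl. replace (2 * h * f 0) with (h * (2 * f 0)) by ring. apply Rmult_le_compat_l; [lra|].
  set (y := x0 + _). assert (f y <= f 0) by (destruct (Rle_dec y 0); [apply Hi|apply Hd]; lra).
  assert (f x0 <= f 0) by (destruct (Rle_dec x0 0); [apply Hi|apply Hd]; lra).
  pose proof (Hp y); pose proof (Hp x0).
  destruct (Rle_dec y 0); destruct (Rle_dec x0 0); lra.
Qed.

Ltac side := repeat split; try lra; repeat (apply Rmult_integral_contrapositive_currified || apply pow_nonzero); lra.

Lemma der_a (k : R) : 0 < k -> forall x,
  derivable_pt_lim (fun x => atan (x / k) / k) x (/ (x ^ 2 + k ^ 2)).
Proof.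
  intros Hk x. apply is_derive_Reals.
  assert (H1: is_derive (fun x => x / k) x (/k)) by (auto_derive; [auto|field; lra]).
  assert (H2 := is_derive_comp atan (fun x => x/k) x _ _ (is_derive_atan (x/k)) H1).
  assert (H3 := is_derive_scal _ x (/k) _ H2).
  replace (/ (x ^ 2 + k ^ 2)) with (/ k * (/ k * / (1 + (x / k)²))).
  - eapply is_derive_ext; [|exact H3]. intros t; simpl. unfold Rdiv. ring.
  - unfold Rsqr. field. split; [|lra]. nra.
Qed.

Lemma der_b (K : R) : 0 < K -> forall x,
  derivable_pt_lim (fun x => x / (K * sqrt (x^2 + K))) x (/ (sqrt (x^2+K)) ^ 3).
Proof.
  intros HK x. apply is_derive_Reals.
  assert (HD : 0 < x^2 + K) by nra.
  assert (Hs := sqrt_lt_R0 _ HD).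
  assert (Hss := sqrt_sqrt _ (Rlt_le _ _ HD)).
  auto_derive; replace (x * (x * 1)) with (x^2) by ring.
  - side.
  - set (s := sqrt (x^2+K)) in *. clearbody s.
    replace K with (s*s - x^2) by lra. field. nra.
Qed.

Lemma der_c (K : R) : 0 < K -> forall x,
  derivable_pt_lim (fun x => x * (2 * x^2 + 3 * K) / (3 * K^2 * sqrt (x^2 + K) ^ 3)) x
    (/ (sqrt (x^2+K)) ^ 5).
Proof.
  intros HK x. apply is_derive_Reals.
  assert (HD : 0 < x^2 + K) by nra.
  assert (Hs := sqrt_lt_R0 _ HD).
  assert (Hss := sqrt_sqrt _ (Rlt_le _ _ HD)).
  auto_derive; replace (x * (x * 1)) with (x^2) by ring.
  - side.
  - set (s := sqrt (x^2+K)) in *. clearbody s.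
    replace K with (s*s - x^2) by lra. field. nra.
Qed.

Definition Pc (K x : R) := x * (2 * x^2 + 3 * K) / (3 * K^2 * sqrt (x^2 + K) ^ 3).
Definition Pb (K x : R) := x / (K * sqrt (x^2 + K)).
Definition Pa (k x : R) := atan (x / k) / k.

Lemma Pc_odd K x : Pc K (-x) = - Pc K x.
Proof. unfold Pc. replace ((-x)^2) with (x^2) by ring. unfold Rdiv. ring. Qed.

Lemma Pc_bound K x : 0 < K -> Rabs (Pc K x) <= 2 / (3 * K^2).
Proof.
  intros HK. unfold Pc.
  assert (HD : 0 < x^2 + K) by nra.
  assert (Hs := sqrt_lt_R0 _ HD).
  assert (Hss := sqrt_sqrt _ (Rlt_le _ _ HD)).
  set (s := sqrt (x^2+K)) in *. clearbody s.
  set (t := x * (2 * x^2 + 3 * K)).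
  assert (Ht2 : t^2 <= (2 * s^3)^2).
  { unfold t. replace ((2 * s^3)^2) with (4 * (s*s)^3) by ring. rewrite Hss. nra. }
  assert (Hs3 : 0 < s^3) by (apply pow_lt; lra).
  assert (Ht : Rabs t <= 2 * s^3).
  { unfold Rabs; destruct (Rcase_abs t); nra. }
  unfold Rdiv. rewrite Rabs_mult, Rabs_inv, (Rabs_pos_eq (3 * K^2 * s^3)) by (apply Rmult_le_pos; nra).
  apply (Rmult_le_reg_r (3 * K^2 * s^3)); [apply Rmult_lt_0_compat; nra|].
  rewrite Rmult_assoc, Rinv_l by (apply Rgt_not_eq; apply Rmult_lt_0_compat; nra).
  replace (2 * / (3 * K ^ 2) * (3 * K ^ 2 * s ^ 3)) with (2 * s^3) by (field; nra). lra.
Qed.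

Lemma Pc_lower K W x : 0 < K -> 0 <= W -> W <= x ->
  2 / 3 * (/ K^2 - / (K * (W^2 + K))) <= Pc K x.
Proof.
  intros HK HW Hx. unfold Pc.
  assert (HD : 0 < x^2 + K) by nra.
  assert (Hs := sqrt_lt_R0 _ HD).
  assert (Hss := sqrt_sqrt _ (Rlt_le _ _ HD)).
  set (s := sqrt (x^2+K)) in *. clearbody s.
  apply Rle_trans with (2/3 * (x^2 / (K^2 * s^2))).
  - replace (s^2) with (x^2+K) by (rewrite <- Hss; ring).
    replace (x ^ 2 / (K ^ 2 * (x ^ 2 + K))) with (/K^2 - / (K * (x^2+K))) by (field; nra).
    apply Rmult_le_compat_l; [lra|].
    assert (/ (K * (x ^ 2 + K)) <= / (K * (W ^ 2 + K))); [|lra].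
    apply Rinv_le_contravar; [nra|]. apply Rmult_le_compat_l; nra.
  - assert (H1 : 2 * x * s <= 2 * x^2 + 3 * K).
    { assert (0 <= 2*x*s) by nra. assert ((2*x*s)^2 <= (2 * x^2 + 3 * K)^2).
      { replace ((2*x*s)^2) with (4*x^2*(s*s)) by ring. rewrite Hss. nra. }
      nra. }
    assert (Hs3 : 0 < s^3) by (apply pow_lt; lra).
    apply (Rmult_le_reg_r (3 * K^2 * s^3)); [apply Rmult_lt_0_compat; nra|].
    replace (x * (2 * x ^ 2 + 3 * K) / (3 * K ^ 2 * s ^ 3) * (3 * K ^ 2 * s ^ 3))
      with (x * (2 * x ^ 2 + 3 * K)) by (field; nra).
    replace (2 / 3 * (x ^ 2 / (K ^ 2 * s ^ 2)) * (3 * K ^ 2 * s ^ 3)) with (x * (2 * x * s))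
      by (field; nra).
    apply Rmult_le_compat_l; lra.
Qed.

Lemma Pb_bound K x : 0 < K -> Rabs (Pb K x) <= / K.
Proof.
  intros HK. unfold Pb.
  assert (HD : 0 < x^2 + K) by nra.
  assert (Hs := sqrt_lt_R0 _ HD).
  assert (Hss := sqrt_sqrt _ (Rlt_le _ _ HD)).
  set (s := sqrt (x^2+K)) in *. clearbody s.
  assert (Rabs x <= s).
  { assert (x^2 <= s^2) by nra. unfold Rabs; destruct (Rcase_abs x); nra. }
  unfold Rdiv. rewrite Rabs_mult, Rabs_inv, (Rabs_pos_eq (K * s)) by nra.
  apply (Rmult_le_reg_r (K * s)); [nra|].
  rewrite Rmult_assoc, Rinv_l by nra. replace (/ K * (K * s)) with s by (field; lra). lra.
Qed.

Lemma Pa_diff k x y : 0 < k -> Pa k y - Pa k x <= PI / k.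
Proof.
  intros Hk. unfold Pa. pose proof (atan_bound (y/k)). pose proof (atan_bound (x/k)).
  unfold Rdiv. rewrite <- Rmult_minus_distr_r. apply Rmult_le_compat_r.
  - left; apply Rinv_0_lt_compat; lra.
  - lra.
Qed.

Lemma uni_sq (f g : R -> R) : (forall x, f x = g (x^2)) ->
  (forall u v, 0 <= u <= v -> g v <= g u) ->
  (forall x y, x <= y <= 0 -> f x <= f y) /\ (forall x y, 0 <= x <= y -> f y <= f x).
Proof.
  intros Hf Hg. split; intros x y H; rewrite !Hf; apply Hg; nra.
Qed.

Lemma fpow_props K n : 0 < K ->
  (forall x, 0 <= / sqrt (x^2+K) ^ n) /\
  (forall x y, x <= y <= 0 -> / sqrt (x^2+K) ^ n <= / sqrt (y^2+K) ^ n) /\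
  (forall x y, 0 <= x <= y -> / sqrt (y^2+K) ^ n <= / sqrt (x^2+K) ^ n).
Proof.
  intros HK. split.
  - intros x. left. apply Rinv_0_lt_compat, pow_lt, sqrt_lt_R0. nra.
  - apply (uni_sq (fun x => / sqrt (x^2+K) ^ n) (fun u => / sqrt (u+K) ^ n)); [reflexivity|].
    intros u v Huv. apply Rinv_le_contravar; [apply pow_lt, sqrt_lt_R0; lra|].
    apply pow_incr. split; [apply sqrt_pos|]. apply sqrt_le_1_alt. lra.
Qed.

Lemma fa_props k : 0 < k ->
  (forall x, 0 <= / (x^2+k^2)) /\
  (forall x y, x <= y <= 0 -> / (x^2+k^2) <= / (y^2+k^2)) /\
  (forall x y, 0 <= x <= y -> / (y^2+k^2) <= / (x^2+k^2)).
Proof.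
  intros Hk. split.
  - intros x. left. apply Rinv_0_lt_compat. nra.
  - apply (uni_sq (fun x => / (x^2+k^2)) (fun u => / (u+k^2))); [reflexivity|].
    intros u v Huv. apply Rinv_le_contravar; nra.
Qed.

Lemma sum_mult_l (c : R) (f : nat -> R) (n : nat) :
  sum_f_R0 (fun i => c * f i) n = c * sum_f_R0 f n.
Proof. rewrite scal_sum. apply sum_eq. intros; ring. Qed.

Lemma sum_swap (f : nat -> nat -> R) (n m : nat) :
  sum_f_R0 (fun k => sum_f_R0 (fun l => f k l) m) n =
  sum_f_R0 (fun l => sum_f_R0 (fun k => f k l) n) m.
Proof.
  induction n as [|n IH].
  - reflexivity.
  - rewrite tech5, IH, <- sum_plus. apply sum_eq. intros. rewrite tech5. reflexivity.
Qed.

Lemma SA (k h y0 : R) (n : nat) : 0 < k -> 0 < h ->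
  Rabs (sum_f_R0 (fun l => h * / ((y0 + INR l * h)^2 + k^2)) n
        - (Pa k (y0 + INR (S n) * h) - Pa k y0)) <= 2 * h / k^2.
Proof.
  intros Hk Hh. destruct (fa_props k Hk) as [H1 [H2 H3]].
  pose proof (riemann_uni (fun x => / (x^2 + k^2)) (Pa k) h y0 n Hh (der_a k Hk) H1 H2 H3) as H.
  cbv beta in H. replace (0^2 + k^2) with (k^2) in H by ring. unfold Rdiv. exact H.
Qed.

Lemma SB (K h y0 : R) (n : nat) : 0 < K -> 0 < h ->
  Rabs (sum_f_R0 (fun l => h * / sqrt ((y0 + INR l * h)^2 + K) ^ 3) n
        - (Pb K (y0 + INR (S n) * h) - Pb K y0)) <= 2 * h / sqrt K ^ 3.
Proof.
  intros Hk Hh. destruct (fpow_props K 3 Hk) as [H1 [H2 H3]].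
  pose proof (riemann_uni _ (Pb K) h y0 n Hh (der_b K Hk) H1 H2 H3) as H.
  cbv beta in H. replace (0^2 + K) with K in H by ring. unfold Rdiv. exact H.
Qed.

Lemma SC (K h y0 : R) (n : nat) : 0 < K -> 0 < h ->
  Rabs (sum_f_R0 (fun l => h * / sqrt ((y0 + INR l * h)^2 + K) ^ 5) n
        - (Pc K (y0 + INR (S n) * h) - Pc K y0)) <= 2 * h / sqrt K ^ 5.
Proof.
  intros Hk Hh. destruct (fpow_props K 5 Hk) as [H1 [H2 H3]].
  pose proof (riemann_uni _ (Pc K) h y0 n Hh (der_c K Hk) H1 H2 H3) as H.
  cbv beta in H. replace (0^2 + K) with K in H by ring. unfold Rdiv. exact H.
Qed.

Lemma Rabs_le_inv x y : Rabs x <= y -> - y <= x <= y.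
Proof. unfold Rabs; destruct (Rcase_abs x); lra. Qed.

Lemma inner_upper (Psi e x0 w : R) (n : nat) : 0 < Psi -> 0 < e ->
  Psi * (w^2 + Psi^2) * sum_f_R0 (fun k => e * / sqrt ((x0 + INR k * e)^2 + (w^2 + Psi^2))^5) n
  <= 4/3 * Psi * / (w^2 + Psi^2) + 2 * e * Psi * / sqrt (w^2 + Psi^2) ^ 3.
Proof.
  intros HP He. set (K := w^2 + Psi^2). assert (HK : 0 < K) by (unfold K; nra).
  pose proof (Rabs_le_inv _ _ (SC K e x0 n HK He)) as [_ H].
  pose proof (Rabs_le_inv _ _ (Pc_bound K (x0 + INR (S n) * e) HK)) as [_ H1].
  pose proof (Rabs_le_inv _ _ (Pc_bound K x0 HK)) as [H2 _].
  assert (Hs := sqrt_lt_R0 _ HK). assert (Hss := sqrt_sqrt _ (Rlt_le _ _ HK)).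
  set (I := sum_f_R0 _ n) in *. set (s := sqrt K) in *. clearbody s I.
  assert (HPK : 0 < Psi * K) by nra.
  apply Rle_trans with (Psi * K * (2 / (3 * K^2) + 2 / (3 * K^2) + 2 * e / s^5)).
  - apply Rmult_le_compat_l; lra.
  - right. replace K with (s*s) by lra. field. lra.
Qed.

Lemma inner_lower (Psi e x0 w W : R) (n : nat) : 0 < Psi -> 0 < e ->
  0 <= W -> W <= x0 + INR (S n) * e -> W <= - x0 ->
  4/3 * Psi * / (w^2 + Psi^2) - 4/3 * Psi * / (w^2 + sqrt (W^2 + Psi^2)^2)
    - 2 * e * Psi * / sqrt (w^2 + Psi^2) ^ 3
  <= Psi * (w^2 + Psi^2) * sum_f_R0 (fun k => e * / sqrt ((x0 + INR k * e)^2 + (w^2 + Psi^2))^5) n.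
Proof.
  intros HP He HW H1 H2. set (K := w^2 + Psi^2). assert (HK : 0 < K) by (unfold K; nra).
  pose proof (Rabs_le_inv _ _ (SC K e x0 n HK He)) as [H _].
  pose proof (Pc_lower K W _ HK HW H1) as L1.
  pose proof (Pc_lower K W _ HK HW H2) as L2. rewrite Pc_odd in L2.
  rewrite pow2_sqrt by nra.
  replace (w ^ 2 + (W ^ 2 + Psi ^ 2)) with (W^2 + K) by (unfold K; ring).
  assert (Hs := sqrt_lt_R0 _ HK). assert (Hss := sqrt_sqrt _ (Rlt_le _ _ HK)).
  set (I := sum_f_R0 _ n) in *. set (s := sqrt K) in *. 
  set (X1 := x0 + INR (S n) * e) in *. clearbody s I.
  assert (HPK : 0 < Psi * K) by nra.
  apply Rle_trans with (Psi * K * (2 * (2 / 3 * (/ K ^ 2 - / (K * (W ^ 2 + K)))) - 2 * e / s^5)).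
  - right. replace K with (s*s) by lra. field. split; [lra|]. nra.
  - apply Rmult_le_compat_l; lra.
Qed.

Definition Tsum Psi e x0 y0 n m := sum_f_R0 (fun l => e * (Psi * ((y0 + INR l * e)^2 + Psi^2) *
  sum_f_R0 (fun k => e * / sqrt ((x0 + INR k * e)^2 + ((y0 + INR l * e)^2 + Psi^2))^5) n)) m.

Lemma sumA_upper Psi e y0 m : 0 < Psi -> 0 < e ->
  sum_f_R0 (fun l => e * / ((y0 + INR l * e)^2 + Psi^2)) m <= PI / Psi + 2 * e / Psi^2.
Proof.
  intros HP He. pose proof (Rabs_le_inv _ _ (SA Psi e y0 m HP He)) as [_ H].
  pose proof (Pa_diff Psi y0 (y0 + INR (S m) * e) HP). lra.
Qed.

Lemma sumB_upper Psi e y0 m : 0 < Psi -> 0 < e ->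
  sum_f_R0 (fun l => e * / sqrt ((y0 + INR l * e)^2 + Psi^2) ^ 3) m <= 2 / Psi^2 + 2 * e / Psi^3.
Proof.
  intros HP He. assert (HK : 0 < Psi^2) by nra.
  pose proof (Rabs_le_inv _ _ (SB (Psi^2) e y0 m HK He)) as [_ H].
  pose proof (Rabs_le_inv _ _ (Pb_bound (Psi^2) y0 HK)) as [H1 _].
  pose proof (Rabs_le_inv _ _ (Pb_bound (Psi^2) (y0 + INR (S m) * e) HK)) as [_ H2].
  rewrite sqrt_pow2 in H by lra. unfold Rdiv in *. lra.
Qed.

Lemma sum_lin2 (e al be : R) (f g : nat -> R) m :
  sum_f_R0 (fun l => e * (al * f l + be * g l)) m =
  al * sum_f_R0 (fun l => e * f l) m + be * sum_f_R0 (fun l => e * g l) m.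
Proof.
  rewrite <- !sum_mult_l, <- sum_plus. apply sum_eq. intros; ring.
Qed.

Lemma sum_lin3 (e al be ga : R) (f g h : nat -> R) m :
  sum_f_R0 (fun l => e * (al * f l - be * g l - ga * h l)) m =
  al * sum_f_R0 (fun l => e * f l) m - be * sum_f_R0 (fun l => e * g l) m
  - ga * sum_f_R0 (fun l => e * h l) m.
Proof.
  induction m as [|m IH]; simpl; [ring|]. rewrite IH. ring.
Qed.

Lemma T_upper Psi e x0 y0 n m : 0 < Psi -> 0 < e -> e <= 1 ->
  Tsum Psi e x0 y0 n m <= 4 * PI / 3 + e * (10 / Psi + 4 / Psi^2).
Proof.
  intros HP He He1. unfold Tsum.
  eapply Rle_trans.
  { apply sum_Rle. intros l _. apply Rmult_le_compat_l; [lra|].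
    apply (inner_upper Psi e x0 (y0 + INR l * e) n HP He). }
  replace (fun l => e * (4 / 3 * Psi * / ((y0 + INR l * e) ^ 2 + Psi ^ 2) +
                         2 * e * Psi * / sqrt ((y0 + INR l * e) ^ 2 + Psi ^ 2) ^ 3))
    with (fun l => e * ((4 / 3 * Psi) * / ((y0 + INR l * e) ^ 2 + Psi ^ 2) +
                         (2 * e * Psi) * / sqrt ((y0 + INR l * e) ^ 2 + Psi ^ 2) ^ 3))
    by (apply functional_extensionality; intros; ring).
  rewrite (sum_lin2 e _ _ (fun l => / ((y0 + INR l * e) ^ 2 + Psi ^ 2))
                        (fun l => / sqrt ((y0 + INR l * e) ^ 2 + Psi ^ 2) ^ 3)).
  pose proof (sumA_upper Psi e y0 m HP He). pose proof (sumB_upper Psi e y0 m HP He).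
  apply Rle_trans with (4/3 * Psi * (PI / Psi + 2 * e / Psi^2) + 2 * e * Psi * (2 / Psi^2 + 2 * e / Psi^3)).
  - apply Rplus_le_compat; apply Rmult_le_compat_l; nra.
  - apply Rle_trans with (4 * PI / 3 + e * (8/3 / Psi + 4 / Psi) + e * (4 * e / Psi^2)).
    + right. field. lra.
    + assert (0 < / Psi^2) by (apply Rinv_0_lt_compat; nra).
      assert (0 < / Psi) by (apply Rinv_0_lt_compat; nra).
      assert (e * (4*e/Psi^2) <= e * (4/Psi^2)).
      { apply Rmult_le_compat_l; [lra|]. unfold Rdiv. apply Rmult_le_compat_r; lra. }
      assert (e * (8/3/Psi + 4/Psi) <= e * (10/Psi)).
      { apply Rmult_le_compat_l; [lra|]. unfold Rdiv. lra. }
      lra.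
Qed.

Lemma atan_le x y : x <= y -> atan x <= atan y.
Proof. intros [H|H]; [left; apply atan_increasing; auto| subst; lra]. Qed.

Lemma T_lower Psi e x0 y0 n m W t : 0 < Psi -> 0 < e -> e <= 1 -> 0 < W ->
  W <= x0 + INR (S n) * e -> W <= - x0 ->
  Psi * t <= y0 + INR (S m) * e -> Psi * t <= - y0 ->
  4 * PI / 3 - e * (10 / Psi + 4 / Psi^2) - 4/3 * PI * Psi / W - 8/3 * (PI/2 - atan t)
  <= Tsum Psi e x0 y0 n m.
Proof.
  intros HP He He1 HW H1 H2 H3 H4. unfold Tsum.
  eapply Rle_trans; swap 1 2.
  { apply sum_Rle. intros l _. apply Rmult_le_compat_l; [lra|].
    apply (inner_lower Psi e x0 (y0 + INR l * e) W n HP He (Rlt_le _ _ HW) H1 H2). }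
  rewrite (sum_lin3 e _ _ _ (fun l => / ((y0 + INR l * e) ^ 2 + Psi ^ 2))
                        (fun l => / ((y0 + INR l * e) ^ 2 + sqrt (W^2 + Psi^2) ^ 2))
                        (fun l => / sqrt ((y0 + INR l * e) ^ 2 + Psi ^ 2) ^ 3)).
  set (k := sqrt (W^2 + Psi^2)).
  assert (Hk2 : k^2 = W^2 + Psi^2) by (apply pow2_sqrt; nra).
  assert (Hk : 0 < k) by (apply sqrt_lt_R0; nra).
  pose proof (Rabs_le_inv _ _ (SA Psi e y0 m HP He)) as [HA _].
  pose proof (sumA_upper k e y0 m Hk He) as HA'.
  pose proof (sumB_upper Psi e y0 m HP He) as HB.
  set (SA := sum_f_R0 (fun l => e * / ((y0 + INR l * e) ^ 2 + Psi ^ 2)) m) in *.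
  set (SA' := sum_f_R0 (fun l => e * / ((y0 + INR l * e) ^ 2 + k ^ 2)) m) in *.
  set (SB := sum_f_R0 (fun l => e * / sqrt ((y0 + INR l * e) ^ 2 + Psi ^ 2) ^ 3) m) in *.
  assert (Ha1 : atan t <= atan ((y0 + INR (S m) * e) / Psi)).
  { apply atan_le. apply (Rmult_le_reg_l Psi); [lra|]. field_simplify; lra. }
  assert (Ha2 : atan t <= - atan (y0 / Psi)).
  { rewrite <- atan_opp. apply atan_le. apply (Rmult_le_reg_l Psi); [lra|]. field_simplify; lra. }
  unfold Pa in HA.
  set (a1 := atan ((y0 + INR (S m) * e) / Psi)) in *. set (a0 := atan (y0 / Psi)) in *.
  assert (E1' : 8/3 * atan t <= 4/3 * (a1 - a0)) by lra.
  assert (E1'' : 4/3 * (a1 - a0) - 8/3 * e / Psi <= 4/3 * Psi * SA).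
  { apply Rle_trans with (4/3 * Psi * (a1 / Psi - a0 / Psi - 2 * e / Psi^2)).
    - right. field. lra.
    - apply Rmult_le_compat_l; lra. }
  assert (E2 : 4/3 * Psi * SA' <= 4/3 * PI * Psi / W + 8/3 * e / Psi).
  { apply Rle_trans with (4/3 * Psi * (PI / k + 2 * e / k^2)); [apply Rmult_le_compat_l; lra|].
    assert (Psi / k <= Psi / W).
    { unfold Rdiv. apply Rmult_le_compat_l; [lra|]. apply Rinv_le_contravar; [lra|].
      apply Rsqr_incr_0_var; [unfold Rsqr; nra|lra]. }
    assert (e * Psi / k^2 <= e / Psi).
    { unfold Rdiv. rewrite Rmult_assoc. apply Rmult_le_compat_l; [lra|].
      apply Rle_trans with (Psi * / Psi^2); [|right; field; lra].
      apply Rmult_le_compat_l; [lra|]. apply Rinv_le_contravar; nra. }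
    assert (0 <= PI) by (pose proof PI2_1; lra).
    apply Rle_trans with (4/3 * PI * (Psi / k) + 8/3 * (e * Psi / k^2)); [right; field; lra|].
    apply Rle_trans with (4/3 * PI * (Psi / W) + 8/3 * (e / Psi)); [|right; field; lra].
    apply Rplus_le_compat; apply Rmult_le_compat_l; nra. }
  assert (E3 : 2 * e * Psi * SB <= 4 * e / Psi + 4 * e / Psi^2).
  { apply Rle_trans with (2 * e * Psi * (2 / Psi ^ 2 + 2 * e / Psi ^ 3)); [apply Rmult_le_compat_l; nra|].
    apply Rle_trans with (4 * e / Psi + 4 * (e * e) / Psi^2); [right; field; lra|].
    assert (0 < / Psi^2) by (apply Rinv_0_lt_compat; nra).
    unfold Rdiv. assert (e * e <= e) by nra. nra. }
  assert (E4 : e * (28/3 / Psi + 4 / Psi^2) <= e * (10 / Psi + 4 / Psi^2)).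
  { apply Rmult_le_compat_l; [lra|]. assert (0 < / Psi) by (apply Rinv_0_lt_compat; nra). unfold Rdiv. lra. }
  assert (EQ : e * (28/3 / Psi + 4 / Psi^2) = 8/3 * e / Psi + 8/3 * e / Psi + (4 * e / Psi + 4 * e / Psi^2))
    by (field; lra).
  lra.
Qed.
Lemma term_eq A d lam r th ph ny nz : 0 < A -> 0 < r -> 0 < Psi th ph ->
  Cmod (h_entry A d lam r th ph ny nz) ^ 2 =
  A / (4 * PI * r^2) * (Psi th ph * ((nz * (d/r) - Omega th)^2 + Psi th ph^2)
    * / sqrt ((ny * (d/r) - Phi th ph)^2 + ((nz * (d/r) - Omega th)^2 + Psi th ph^2)) ^ 5).
Proof.
  intros HA Hr HP. unfold h_entry, Cmod, rdist. cbv zeta. cbn [fst snd].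
  set (Ps := Psi th ph) in *. set (D := (ny * (d / r) - Phi th ph) ^ 2 + (nz * (d / r) - Omega th) ^ 2 + Ps ^ 2).
  replace ((ny * (d / r) - Phi th ph) ^ 2 + ((nz * (d / r) - Omega th) ^ 2 + Ps ^ 2)) with D by (unfold D; ring).
  assert (HD : 0 < D) by (unfold D; pose proof (pow2_ge_0 (ny * (d / r) - Phi th ph)); pose proof (pow2_ge_0 (nz * (d / r) - Omega th)); pose proof (pow_lt Ps 2 HP); lra).
  assert (Hs := sqrt_lt_R0 _ HD). set (s := sqrt D) in *.
  set (th2 := 2 * PI / lam * (r * s)).
  assert (PIpos : 0 < PI) by exact PI_RGT_0.
  set (X := A * (r ^ 3 * Ps ^ 3 + r * Ps * (r * Omega th - nz * d) ^ 2) / (4 * PI * (r * s) ^ 5)).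
  assert (HX : 0 <= X).
  { unfold X. apply Rmult_le_pos; [apply Rmult_le_pos; [lra|]|].
    - assert (0 <= r * Ps * (r * Omega th - nz * d) ^ 2) by (apply Rmult_le_pos; [nra|apply pow2_ge_0]).
      assert (0 <= r^3 * Ps^3) by (apply Rmult_le_pos; apply pow_le; lra). lra.
    - left. apply Rinv_0_lt_compat. apply Rmult_lt_0_compat; [lra|]. apply pow_lt; nra. }
  rewrite pow2_sqrt.
  2:{ assert (0 <= sqrt X) by apply sqrt_pos. nra. }
  replace ((sqrt X * cos th2) ^ 2 + (- (sqrt X * sin th2)) ^ 2) with (sqrt X ^ 2 * ((sin th2)^2 + (cos th2)^2)) by ring.
  rewrite pow2_sqrt by lra. rewrite <- !Rsqr_pow2, sin2_cos2, Rmult_1_r.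
  unfold X. replace (r * Omega th - nz * d) with (- r * (nz * (d / r) - Omega th)) by (field; lra).
  unfold Rsqr. field. split; lra.
Qed.

Lemma hnorm_sq_eq A d lam r th ph a b : 0 < A -> 0 < d -> 0 < r -> 0 < Psi th ph ->
  hnorm_sq A d lam r th ph a b = zeta A d / (4 * PI) *
    Tsum (Psi th ph) (d/r) (-(INR a * (d/r)) - Phi th ph) (-(INR b * (d/r)) - Omega th) (2*a) (2*b).
Proof.
  intros HA Hd Hr HP. unfold hnorm_sq, Tsum.
  set (e := d / r). set (x0 := -(INR a * e) - Phi th ph). set (y0 := -(INR b * e) - Omega th).
  set (Ps := Psi th ph).
  set (c := zeta A d / (4 * PI)).
  transitivity (sum_f_R0 (fun k => sum_f_R0 (fun l => c * (e * (e * (Ps * ((y0 + INR l * e)^2 + Ps^2)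
     * / sqrt ((x0 + INR k * e)^2 + ((y0 + INR l * e)^2 + Ps^2)) ^ 5)))) (2*b)) (2*a)).
  - apply sum_eq; intros k _; apply sum_eq; intros l _.
    rewrite term_eq by auto. fold e. fold Ps.
    replace ((INR k - INR a) * e - Phi th ph) with (x0 + INR k * e) by (unfold x0; ring).
    replace ((INR l - INR b) * e - Omega th) with (y0 + INR l * e) by (unfold y0; ring).
    unfold c, zeta, e. assert (0 < PI) by exact PI_RGT_0. assert (0 < sqrt ((x0 + INR k * (d / r)) ^ 2 + ((y0 + INR l * (d / r)) ^ 2 + Ps ^ 2))) by (apply sqrt_lt_R0; pose proof (pow2_ge_0 (x0 + INR k * (d / r))); pose proof (pow2_ge_0 (y0 + INR l * (d / r))); pose proof (pow_lt Ps 2 HP); lra). field. repeat split; lra.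
  - rewrite sum_swap. rewrite <- !sum_mult_l. apply sum_eq; intros l _.
    rewrite <- !sum_mult_l. apply sum_eq; intros k _. ring.
Qed.

Lemma Rabs_le_inv' x y : Rabs x <= y -> - y <= x <= y.
Proof. unfold Rabs; destruct (Rcase_abs x); lra. Qed.

Lemma ln_le_sub1 x : 0 < x -> ln x <= x - 1.
Proof. intros Hx. pose proof (exp_ineq1_le (ln x)). rewrite exp_ln in H by lra. lra. Qed.

Lemma ln_lip x y : 1 <= y -> y <= x -> ln x - ln y <= x - y.
Proof.
  intros Hy Hxy. rewrite <- ln_div by lra.
  pose proof (ln_le_sub1 (x / y) ltac:(apply Rdiv_lt_0_compat; lra)).
  assert (x / y - 1 <= x - y).
  { apply (Rmult_le_reg_r y); [lra|]. field_simplify; [|lra]. nra. }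
  lra.
Qed.

Lemma ln_lip_abs x y : 1 <= x -> 1 <= y -> Rabs (ln x - ln y) <= Rabs (x - y).
Proof.
  intros Hx Hy. destruct (Rle_dec y x).
  - pose proof (ln_lip x y Hy r). assert (ln y <= ln x) by (destruct r as [r|r]; [left; apply ln_increasing; lra| subst; lra]).
    rewrite !Rabs_pos_eq; lra.
  - pose proof (ln_lip y x Hx ltac:(lra)). assert (ln x <= ln y) by (left; apply ln_increasing; lra).
    rewrite !Rabs_left1; lra.
Qed.

Lemma final_step (p al z S de : R) (L : nat) : 0 < p -> 0 < al -> 0 < z -> (0 < L)%nat -> 0 < de ->
  Rabs (S - z/3) < Rmin (z/3) (de * ln 2 / (2 * p * al * z)) ->
  Rabs (/ INR L * log2 (1 + p * INR L * al * sqrt S ^ 4)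
        - / INR L * log2 (1 + p * INR L * al * z ^ 2 / 9)) < de.
Proof.
  intros Hp Hal Hz HL Hde HS.
  assert (Hln2 : 0 < ln 2) by (rewrite <- ln_1; apply ln_increasing; lra).
  assert (HLr : 0 < INR L) by (apply lt_0_INR; auto).
  pose proof (Rmin_l (z/3) (de * ln 2 / (2 * p * al * z))).
  pose proof (Rmin_r (z/3) (de * ln 2 / (2 * p * al * z))).
  set (m := Rmin _ _) in *.
  pose proof (Rabs_le_inv' (S - z/3) m ltac:(lra)) as [HS1 HS2].
  assert (HS0 : 0 <= S) by lra.
  replace (sqrt S ^ 4) with (S^2) by (replace 4%nat with (2*2)%nat by reflexivity; rewrite pow_mult, pow2_sqrt; lra).
  set (c := p * INR L * al).
  assert (Hc : 0 < c) by (unfold c; repeat apply Rmult_lt_0_compat; lra).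
  replace (c * z^2 / 9) with (c * (z/3)^2) by (field).
  unfold log2.
  replace (/ INR L * (ln (1 + c * S ^ 2) / ln 2) - / INR L * (ln (1 + c * (z / 3) ^ 2) / ln 2))
    with ((ln (1 + c * S ^ 2) - ln (1 + c * (z / 3) ^ 2)) * / (INR L * ln 2)) by (field; lra).
  rewrite Rabs_mult, (Rabs_pos_eq (/ (INR L * ln 2))) by (left; apply Rinv_0_lt_compat; nra).
  assert (0 <= c * S^2) by nra. assert (0 <= c * (z/3)^2) by nra.
  pose proof (ln_lip_abs (1 + c * S ^ 2) (1 + c * (z / 3) ^ 2) ltac:(lra) ltac:(lra)) as Hl.
  replace (1 + c * S ^ 2 - (1 + c * (z / 3) ^ 2)) with (c * ((S - z/3) * (S + z/3))) in Hl by ring.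
  rewrite Rabs_mult, (Rabs_pos_eq c), Rabs_mult in Hl by lra.
  assert (HSz : Rabs (S + z/3) <= z) by (rewrite Rabs_pos_eq; lra).
  assert (Hm : Rabs (S - z/3) * Rabs (S + z/3) <= m * z).
  { apply Rmult_le_compat; try apply Rabs_pos; lra. }
  assert (Hm2 : c * m * z <= INR L * (de * ln 2) / 2).
  { apply Rle_trans with (c * (de * ln 2 / (2 * p * al * z)) * z).
    - apply Rmult_le_compat_r; [lra|]. apply Rmult_le_compat_l; lra.
    - right. unfold c. field. repeat split; lra. }
  apply (Rmult_lt_reg_r (INR L * ln 2)); [nra|].
  rewrite Rmult_assoc, Rinv_l by nra. rewrite Rmult_1_r.
  assert (c * (Rabs (S - z / 3) * Rabs (S + z / 3)) <= c * (m * z)) by (apply Rmult_le_compat_l; lra).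
  assert (0 < INR L * (de * ln 2)) by (apply Rmult_lt_0_compat; [lra|]; apply Rmult_lt_0_compat; lra).
  replace (c * m * z) with (c * (m * z)) in Hm2 by ring.
  replace (de * (INR L * ln 2)) with (INR L * (de * ln 2)) by ring.
  lra.
Qed.

Theorem corollary5 :
  forall (A d lam th ph p alpha : R) (L : nat),
    0 < A -> 0 < d -> A < d ^ 2 -> 0 < lam ->
    0 <= th <= PI -> - (PI / 2) <= ph <= PI / 2 -> 0 < Psi th ph ->
    0 < p -> (0 < L)%nat -> 0 < alpha ->
    forall delta : R, 0 < delta ->
      exists R0 : R, 0 < R0 /\
        forall r : R, R0 <= r ->
          exists M : nat, forall a b : nat, (M <= a)%nat -> (M <= b)%nat ->
            Rabs (rate_ds p alpha L A d lam r th ph a b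
                  - / INR L * log2 (1 + p * INR L * alpha * zeta A d ^ 2 / 9))
            < delta.
Proof.
  intros A d lam th ph p alpha L HA Hd HAd Hlam Hth Hph HP Hp HL Hal delta Hdel.
  assert (HPhi : -1 <= Phi th ph <= 1).
  { unfold Phi. pose proof (SIN_bound th). pose proof (SIN_bound ph). split; nra. }
  assert (HOm : -1 <= Omega th <= 1) by (unfold Omega; apply COS_bound).
  assert (HPI : 0 < PI) by exact PI_RGT_0.
  pose proof PI2_1 as HPI2.
  set (Ps := Psi th ph) in *.
  set (z := zeta A d).
  assert (Hz : 0 < z) by (unfold z, zeta; apply Rdiv_lt_0_compat; [lra|apply pow_lt; lra]).
  assert (Hln2 : 0 < ln 2) by (rewrite <- ln_1; apply ln_increasing; lra).
  set (etaS := Rmin (z/3) (delta * ln 2 / (2 * p * alpha * z))).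
  assert (HetaS : 0 < etaS).
  { unfold etaS. apply Rmin_case; [lra|]. apply Rdiv_lt_0_compat; [nra|].
    apply Rmult_lt_0_compat; [|lra]. apply Rmult_lt_0_compat; [|lra]. apply Rmult_lt_0_compat; lra. }
  set (eta := 4 * PI * etaS / z).
  assert (Heta : 0 < eta) by (unfold eta; apply Rdiv_lt_0_compat; [nra|lra]).
  set (C := 10 / Ps + 4 / Ps^2).
  assert (HC : 0 < C).
  { unfold C. assert (0 < 10 / Ps) by (apply Rdiv_lt_0_compat; lra).
    assert (0 < 4 / Ps^2) by (apply Rdiv_lt_0_compat; [lra|apply pow_lt; lra]). lra. }
  set (e0 := Rmin 1 (eta / (6 * C))).
  assert (He0 : 0 < e0) by (unfold e0; apply Rmin_case; [lra|apply Rdiv_lt_0_compat; lra]).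
  assert (He01 : e0 <= 1) by apply Rmin_l.
  assert (He02 : e0 <= eta / (6 * C)) by apply Rmin_r.
  exists (d / e0). split; [apply Rdiv_lt_0_compat; lra|].
  intros r Hr.
  assert (Hr0 : 0 < r) by (pose proof (Rdiv_lt_0_compat d e0 Hd He0); lra).
  set (e := d / r).
  assert (He : 0 < e) by (apply Rdiv_lt_0_compat; lra).
  assert (Hee0 : e <= e0).
  { unfold e. apply (Rmult_le_reg_r r); [lra|]. replace (d / r * r) with d by (field; lra).
    replace d with (d / e0 * e0) at 1 by (field; lra). rewrite (Rmult_comm e0 r).
    apply Rmult_le_compat_r; lra. }
  set (W0 := 8 * PI * Ps / eta).
  assert (HW0 : 0 < W0) by (unfold W0; apply Rdiv_lt_0_compat; [nra|lra]).
  set (beta := Rmin (eta / 16) 1).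
  assert (Hbeta : 0 < beta) by (unfold beta; apply Rmin_case; lra).
  assert (Hbeta1 : beta <= 1) by apply Rmin_r.
  assert (Hbeta2 : beta <= eta / 16) by apply Rmin_l.
  set (t0 := tan (PI / 2 - beta)).
  assert (Hat : atan t0 = PI / 2 - beta) by (apply atan_tan; lra).
  set (Big := 1 + W0 + Ps * Rabs t0).
  destruct (INR_unbounded (Big / e)) as [M HM].
  exists M. intros a b Ha Hb.
  assert (HMe : Big < INR M * e).
  { apply (Rmult_lt_reg_r (/ e)); [apply Rinv_0_lt_compat; lra|].
    replace (INR M * e * / e) with (INR M) by (field; lra). exact HM. }
  assert (Hae : INR M * e <= INR a * e) by (apply Rmult_le_compat_r; [lra|apply le_INR; auto]).
  assert (Hbe : INR M * e <= INR b * e) by (apply Rmult_le_compat_r; [lra|apply le_INR; auto]).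
  assert (Ht0 : Ps * t0 <= Ps * Rabs t0) by (apply Rmult_le_compat_l; [lra|apply Rle_abs]).
  assert (Ht0' : 0 <= Ps * Rabs t0) by (apply Rmult_le_pos; [lra|apply Rabs_pos]).
  unfold rate_ds, hnorm. apply final_step; auto.
  fold z. fold etaS.
  rewrite hnorm_sq_eq by auto. fold z. fold e. fold Ps.
  set (x0 := - (INR a * e) - Phi th ph). set (y0 := - (INR b * e) - Omega th).
  assert (HSa : INR (S (2 * a)) = 2 * INR a + 1) by (rewrite S_INR, mult_INR; simpl; ring).
  assert (HSb : INR (S (2 * b)) = 2 * INR b + 1) by (rewrite S_INR, mult_INR; simpl; ring).
  pose proof (T_upper Ps e x0 y0 (2*a) (2*b) HP He ltac:(lra)) as TU.
  pose proof (T_lower Ps e x0 y0 (2*a) (2*b) W0 t0 HP He ltac:(lra) HW0) as TL.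
  rewrite HSa, HSb in TL. unfold x0, y0 in TL. unfold Big in HMe.
  assert (Hx1 : W0 <= - (INR a * e) - Phi th ph + (2 * INR a + 1) * e) by lra.
  assert (Hx2 : W0 <= - (- (INR a * e) - Phi th ph)) by lra.
  assert (Hy1 : Ps * t0 <= - (INR b * e) - Omega th + (2 * INR b + 1) * e) by lra.
  assert (Hy2 : Ps * t0 <= - (- (INR b * e) - Omega th)) by lra.
  specialize (TL Hx1 Hx2 Hy1 Hy2). fold x0 y0 in TL.
  fold C in TU, TL. rewrite Hat in TL.
  set (T := Tsum Ps e x0 y0 (2 * a) (2 * b)) in *.
  assert (HeC : e * C <= eta / 6).
  { apply Rle_trans with (eta / (6 * C) * C); [apply Rmult_le_compat_r; lra|].
    right. field. lra. }
  assert (HW : 4 / 3 * PI * Ps / W0 = eta / 6) by (unfold W0; field; repeat split; lra).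
  assert (HT : Rabs (T - 4 * PI / 3) <= eta / 2).
  { unfold Rabs; destruct (Rcase_abs _); lra. }
  replace (z / (4 * PI) * T - z / 3) with (z / (4 * PI) * (T - 4 * PI / 3)) by (field; lra).
  rewrite Rabs_mult, (Rabs_pos_eq (z / (4 * PI))) by (left; apply Rdiv_lt_0_compat; lra).
  apply Rle_lt_trans with (z / (4 * PI) * (eta / 2)).
  - apply Rmult_le_compat_l; [left; apply Rdiv_lt_0_compat; lra| exact HT].
  - unfold eta. replace (z / (4 * PI) * (4 * PI * etaS / z / 2)) with (etaS / 2) by (field; lra). lra.
Qed.
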